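(* Let $(G,k)$ be an instance of PITVD, let $x$ be a cut vertex of $G$ and let $C$ be a pendant tree attached to $x$. Suppose some vertex of $C$ has degree at least $3$ in $G$. Let $H_C=\{u\in C: d_G(u)\ge3\}$, let $v\in H_C$ be the (unique) vertex of $H_C$ with the smallest distance from $x$, let $P_{x,v}$ be the unique path between $x$ and $v$ in $G[C\cup\{x\}]$, and let $D$ be the set consisting of the vertices of $P_{x,v}$ together with two arbitrary neighbors of $v$ in $C$ not on $P_{x,v}$. Then $(G,k)$ is a yes-instance of PITVD if and only if $(G-(C\setminus D),k)$ is a yes-instance of PITVD.
   Context: PITVD: the input is an undirected multigraph $G$ (no self-loops) and an integer $k$; the question is whether there exists $X\subseteq V(G)$ with $|X|\le k$ such that $G-X$ is a simple graph and every connected component of $G-X$ is a proper interval graph or a tree. If $x$ is a cut vertex of $G$ and $C$ is a connected component of $G-x$ that is a tree such that $C\cup\{x\}$ induces a tree in $G$, then $C$ is called a pendant tree attached to $x$. *)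

(* Defs.v *)
From mathcomp Require Import all_boot all_order all_algebra.
Set Implicit Arguments. Unset Strict Implicit. Unset Printing Implicit Defensive.
Import Order.TTheory GRing.Theory Num.Theory.

(* A multigraph on a finite vertex type V is given by an edge-multiplicity
   function m : V -> V -> nat (assumed symmetric with m u u = 0 in the
   theorem).  Subgraphs are induced subgraphs G[S] for S : {set V}. *)

Definition madj (V : finType) (m : V -> V -> nat) (S : {set V}) : rel V :=
  fun u w => [&& u \in S, w \in S & 0 < m u w].

Definition simple_on (V : finType) (m : V -> V -> nat) (S : {set V}) : Prop :=
  forall u w, u \in S -> w \in S -> m u w <= 1.

Definition comps (V : finType) (m : V -> V -> nat) (S : {set V}) : {set {set V}} :=
  [set [set w in S | connect (madj m S) u w] | u in S].

Definition connected_on (V : finType) (m : V -> V -> nat) (S : {set V}) : Prop :=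
  forall u w, u \in S -> w \in S -> connect (madj m S) u w.

Definition acyclic_on (V : finType) (m : V -> V -> nat) (S : {set V}) : Prop :=
  forall c : seq V, 3 <= size c -> uniq c -> ~~ cycle (madj m S) c.

Definition is_tree (V : finType) (m : V -> V -> nat) (S : {set V}) : Prop :=
  [/\ S != set0, simple_on m S, connected_on m S & acyclic_on m S].

(* G[S] is a proper interval graph: a simple graph having an interval model
   (closed intervals [l u, r u] of rationals) in which no interval properly
   contains another *)
Definition proper_interval (V : finType) (m : V -> V -> nat) (S : {set V}) : Prop :=
  simple_on m S /\
  exists l r : V -> rat,
    [/\ (forall u, u \in S -> (l u <= r u)%R),
        (forall u w, u \in S -> w \in S -> u != w ->
           (madj m S u w <-> Num.max (l u) (l w) <= Num.min (r u) (r w)))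
      & (forall u w, u \in S -> w \in S ->
           ~ [/\ l u <= l w, r w <= r u & (l u, r u) != (l w, r w)])]%R.

Definition pitvd_yes (V : finType) (m : V -> V -> nat) (S : {set V}) (k : nat) : Prop :=
  exists X : {set V},
    [/\ X \subset S, #|X| <= k, simple_on m (S :\: X)
      & forall K, K \in comps m (S :\: X) -> proper_interval m K \/ is_tree m K].

Definition cut_vertex (V : finType) (m : V -> V -> nat) (x : V) : Prop :=
  #|comps m [set: V]| < #|comps m [set~ x]|.

Definition pendant_tree (V : finType) (m : V -> V -> nat) (x : V) (C : {set V}) : Prop :=
  [/\ cut_vertex m x, C \in comps m [set~ x], is_tree m C & is_tree m (x |: C)].

Definition deg (V : finType) (m : V -> V -> nat) (u : V) : nat := \sum_(w : V) m u w.

Definition walk (V : finType) (m : V -> V -> nat) (x y : V) (n : nat) : Prop :=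
  exists p : seq V, [/\ size p = n, path (madj m [set: V]) x p & last x p = y].

Definition dist_le (V : finType) (m : V -> V -> nat) (x v u : V) : Prop :=
  forall n, walk m x u n -> exists2 n', n' <= n & walk m x v n'.

(* Main.v *)
Require Import Defs.
From mathcomp Require Import all_boot all_order all_algebra.
From mathcomp Require Import lra.
Set Implicit Arguments. Unset Strict Implicit. Unset Printing Implicit Defensive.

Module Helpers.
Import Order.TTheory GRing.Theory Num.Theory.

Section Gen.
Variables (V : finType) (m : V -> V -> nat).
Hypothesis msym : forall u w, m u w = m w u.

Definition comp (T : {set V}) (u : V) := [set w in T | connect (madj m T) u w].

Lemma path_inv (e : rel V) (I : V -> Prop) :
  (forall y z, e y z -> I y -> I z) -> forall p y, path e y p -> I y -> I (last y p).
Proof.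
move=> H; elim=> [|z p IH] y //= /andP[eyz pz] Iy; apply: IH => //; exact: H Iy.
Qed.

Lemma madj_sym (T : {set V}) : symmetric (madj m T).
Proof. by move=> u w; rewrite /madj msym; case: (u \in T); case: (w \in T). Qed.

Lemma madj_sub (T1 T2 : {set V}) : T1 \subset T2 -> subrel (madj m T1) (madj m T2).
Proof.
move=> /subsetP s u w /and3P[uT wT muw]; apply/and3P; split => //; exact: s.
Qed.

Lemma madj_in (T1 T2 : {set V}) u w : u \in T2 -> w \in T2 -> madj m T1 u w -> madj m T2 u w.
Proof. by move=> uT wT /and3P[_ _ h]; apply/and3P. Qed.

Lemma comp_in (T : {set V}) u : u \in T -> comp T u \in comps m T.
Proof. by move=> uT; apply/imsetP; exists u. Qed.

Lemma compsP (T K : {set V}) : K \in comps m T -> exists2 u, u \in T & K = comp T u.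
Proof. by case/imsetP=> u uT ->; exists u. Qed.

Lemma comp_self (T : {set V}) u : u \in T -> u \in comp T u.
Proof. by move=> uT; rewrite inE uT connect0. Qed.

Lemma comp_subset (T : {set V}) u : comp T u \subset T.
Proof. by apply/subsetP=> w; rewrite inE => /andP[]. Qed.

Lemma comp_connected (T : {set V}) u : connected_on m (comp T u).
Proof.
have cs := sym_connect_sym (madj_sym (comp T u)).
have H : forall w, w \in comp T u -> connect (madj m (comp T u)) u w.
  move=> w; rewrite inE => /andP[wT /connectP[q pq e]]; subst w.
  have uT : u \in T.
    case: q pq wT => [|z q] /=; first by [].
    by case/andP=> /and3P[].
  have := @path_inv (madj m T) (fun y => connect (madj m T) u y /\ connect (madj m (comp T u)) u y) _ q u pq.
  case; [|by rewrite !connect0|by []].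
  move=> y z eyz [c1 c2]; have c3 : connect (madj m T) u z := connect_trans c1 (connect1 eyz).
  split=> //; apply: (connect_trans c2); apply: connect1.
  case/and3P: eyz => yT zT myz; apply/and3P; split=> //; rewrite inE ?yT ?zT //.
move=> w1 w2 h1 h2; apply: (connect_trans (y := u)); last exact: H.
by rewrite cs; apply: H.
Qed.

Lemma comp_mono (T1 T2 : {set V}) u : T1 \subset T2 -> comp T1 u \subset comp T2 u.
Proof.
move=> s; apply/subsetP=> w; rewrite !inE => /andP[wT c]; rewrite (subsetP s) //=.
apply: connect_sub c => y z e; apply: connect1; exact: madj_sub e.
Qed.

Lemma conn_sub_comp (K T : {set V}) u : connected_on m K -> K \subset T -> u \in K -> K \subset comp T u.
Proof.
move=> cK s uK; apply/subsetP=> w wK; rewrite inE (subsetP s) //=.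
apply: connect_sub (cK _ _ uK wK) => y z e; apply: connect1; exact: madj_sub e.
Qed.

Definition pt (K : {set V}) := proper_interval m K \/ is_tree m K.

Lemma hered (K K0 : {set V}) : K0 \subset K -> K0 != set0 -> connected_on m K0 -> pt K -> pt K0.
Proof.
move=> /subsetP s n0 c0 [[sK [l [r [h1 h2 h3]]]]|[_ sK _ aK]].
  left; split; first by move=> u w uK wK; apply: sK; apply: s.
  exists l, r; split.
  - by move=> u uK; apply: h1; apply: s.
  - move=> u w uK wK uw; rewrite -h2 ?s //.
    by rewrite /madj uK wK (s _ uK) (s _ wK).
  - by move=> u w uK wK; apply: h3; apply: s.
right; split => //; first by move=> u w uK wK; apply: sK; apply: s.
move=> c c3 cu; apply/negP => cc; move: (aK c c3 cu); rewrite (sub_cycle _ cc) //.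
by move=> u w /and3P[uK wK h]; apply/and3P; split => //; apply: s.
Qed.

Lemma path_side (e : rel V) (P Q : pred V) y s :
  (forall u w, Q u -> Q w -> e u w -> P u = P w) -> all Q (y :: s) -> path e y s ->
  all (fun z => P z == P y) s.
Proof.
move=> H; elim: s y => [|z s IH] y //= /and3P[Qy Qz Qs] /andP[eyz ps].
have Pe := H _ _ Qy Qz eyz.
rewrite Pe eqxx /=.
by have := IH z; rewrite /= Qz Qs => /(_ isT ps).
Qed.

End Gen.

Lemma path_all (V : finType) (m : V -> V -> nat) (T : {set V}) y s : path (madj m T) y s -> all (fun w => w \in T) s.
Proof. by elim: s y => //= z s IH y /andP[/and3P[_ zT _] ps]; rewrite zT /=; exact: IH ps. Qed.

Lemma cycle_all (V : finType) (m : V -> V -> nat) (T : {set V}) c : cycle (madj m T) c -> all (fun w => w \in T) c.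
Proof. by case: c => // y s /= /path_all; rewrite all_rcons. Qed.


Lemma maxmin (x1 x2 y1 y2 : rat) :
  (Num.max x1 x2 <= Num.min y1 y2)%R <-> [/\ x1 <= y1, x1 <= y2, x2 <= y1 & x2 <= y2]%R.
Proof.
rewrite le_min !ge_max; split; first by case/andP=> /andP[-> ->] /andP[-> ->].
by case=> -> -> -> ->.
Qed.

Lemma disj3 (lv rv la ra lb rb lc rc : rat) :
  (la <= ra)%R -> (lb <= rb)%R -> (lc <= rc)%R ->
  (lv <= ra)%R -> (la <= rv)%R -> (lv <= rb)%R -> (lb <= rv)%R -> (lv <= rc)%R -> (lc <= rv)%R ->
  (ra < lb \/ rb < la)%R -> (ra < lc \/ rc < la)%R -> (rb < lc \/ rc < lb)%R ->
  (lv < la /\ ra < rv \/ lv < lb /\ rb < rv \/ lv < lc /\ rc < rv)%R.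
Proof.
move=> *.
repeat match goal with H : (_ \/ _) |- _ => case: H => ? end; lra.
Qed.

Section Claw.
Variables (V : finType) (m : V -> V -> nat).

Lemma claw_not_pig (K : {set V}) v a b c :
  v \in K -> a \in K -> b \in K -> c \in K ->
  a != b -> a != c -> b != c -> v != a -> v != b -> v != c ->
  madj m K v a -> madj m K v b -> madj m K v c ->
  ~~ madj m K a b -> ~~ madj m K a c -> ~~ madj m K b c -> ~ proper_interval m K.
Proof.
move=> vK aK bK cK ab ac bc va vb vc eva evb evc nab nac nbc [_ [l [r [h1 h2 h3]]]].
have adj u w : u \in K -> w \in K -> u != w -> madj m K u w ->
    [/\ l u <= r w, l u <= r u, l w <= r w & l w <= r u]%R.
  move=> uK wK uw e; have /maxmin[? ? ? ?] := (h2 u w uK wK uw).1 e; by split.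
have nadj u w : u \in K -> w \in K -> u != w -> ~~ madj m K u w -> (r u < l w \/ r w < l u)%R.
  move=> uK wK uw e; case: (ltP (r u) (l w)); first by left.
  case: (ltP (r w) (l u)); first by right.
  move=> h h'; exfalso; move/negP: e; apply; apply/(h2 u w uK wK uw)/maxmin; split => //.
  by apply: h1. by apply: h1.
have [A1 A2 A3 A4] := adj _ _ vK aK va eva.
have [B1 B2 B3 B4] := adj _ _ vK bK vb evb.
have [C1 C2 C3 C4] := adj _ _ vK cK vc evc.
have := disj3 A3 B3 C3 A1 A4 B1 B4 C1 C4 (nadj _ _ aK bK ab nab) (nadj _ _ aK cK ac nac) (nadj _ _ bK cK bc nbc).
have fin u : u \in K -> (l v < l u /\ r u < r v)%R -> False.
  move=> uK [h h']; apply: (h3 v u vK uK); split.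
  - exact: ltW.
  - exact: ltW.
  - by rewrite xpair_eqE negb_and (lt_eqF h).
case=> [|[]]; [exact: fin aK|exact: fin bK|exact: fin cK].
Qed.
End Claw.

End Helpers.
Import Helpers.

Theorem lemma19 (V : finType) (m : V -> V -> nat)
  (msym : forall u w, m u w = m w u) (mloop : forall u, m u u = 0)
  (k : nat) (x : V) (C : {set V})
  (hC : pendant_tree m x C)
  (hH : exists2 u, u \in C & 3 <= deg m u)
  (v : V) (hvC : v \in C) (hvdeg : 3 <= deg m v)
  (hvmin : forall u, u \in C -> 3 <= deg m u -> dist_le m x v u)
  (p : seq V) (hp : path (madj m (x |: C)) x p) (hpl : last x p = v)
  (hpu : uniq (x :: p))
  (a b : V) (haC : a \in C) (hbC : b \in C) (hab : a != b)
  (hva : 0 < m v a) (hvb : 0 < m v b)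
  (haP : a \notin x :: p) (hbP : b \notin x :: p) :
  let D := a |: (b |: [set w in x :: p]) in
  pitvd_yes m [set: V] k <-> pitvd_yes m (~: (C :\: D)) k.
Proof.
move=> D.
set S' := ~: (C :\: D).
case: hC => _ hCc hCt hxCt.
have [c0 c0x hC0] := compsP hCc.
have xC : x \notin C.
  by rewrite hC0 /comp inE; apply/negP => /andP[]; rewrite !inE eqxx.
have cross u w : u \in C -> w != x -> 0 < m u w -> w \in C.
  rewrite hC0 /comp !inE => /andP[ux cu] wx muw; rewrite wx /=.
  apply: (connect_trans cu); apply: connect1; apply/and3P; split => //; by rewrite !inE.
have zero u w : u \in C -> w \notin C -> w != x -> m u w = 0.
  move=> uC wC wx; apply/eqP; rewrite -leqn0 leqNgt; apply/negP => h.
  by rewrite (cross u w uC wx h) in wC.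
have SpE w : (w \in S') = (w \in D) || (w \notin C).
  by rewrite /S' in_setC in_setD negb_and negbK.
have inD w : (w \in D) = [|| w == a, w == b | w \in x :: p].
  by rewrite /D in_setU1 in_setU1 in_set.
have nCS w : w \notin C -> w \in S' by move=> h; rewrite SpE h orbT.
have pC := path_all hp.
have xpC w : w \in x :: p -> w \in x |: C.
  rewrite inE => /predU1P[->|wp]; first exact: setU11.
  exact: (allP pC).
have vp : v \in x :: p by rewrite -hpl mem_last.
have vx : v != x by apply/eqP => e; move: xC; rewrite -e hvC.
have [q hq] : exists q, p = rcons q v.
  case/lastP E: p => [|q y]; first by rewrite E /= in hpl; rewrite hpl eqxx in vx.
  by exists q; rewrite E last_rcons in hpl; rewrite hpl.
set pr := last x q.
have prp : pr \in x :: p by rewrite hq -rcons_cons mem_rcons inE mem_last orbT.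
have vq : v \notin x :: q by move: hpu; rewrite hq -rcons_cons rcons_uniq => /andP[].
have prv : pr != v by apply/eqP => e; move: vq; rewrite -e mem_last.
have mprv : 0 < m pr v by move: hp; rewrite hq rcons_path => /andP[_ /and3P[]].
have sub_side (K : {set V}) u0 w : x \notin K -> connected_on m K -> u0 \in K -> w \in K ->
    (w \in C) = (u0 \in C).
  move=> xK cK u0K wK; symmetry; apply: (closed_connect (e := madj m K)) (cK _ _ u0K wK).
  move=> y z /and3P[yK zK myz].
  have yx : y != x by apply: contraNneq xK => <-.
  have zx : z != x by apply: contraNneq xK => <-.
  case yC: (y \in C); first by rewrite (cross y z yC zx myz).
  case zC: (z \in C) => //; by rewrite (cross z y zC yx ltac:(by rewrite msym)) in yC.
split.
- case=> X [_ Xk Xs XK]; exists (X :&: S').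
  have sub1 : S' :\: (X :&: S') \subset [set: V] :\: X.
    apply/subsetP => u; rewrite !in_setD in_setI in_setT.
    by case: (u \in X); case: (u \in S').
  split.
  + exact: subsetIr.
  + exact: leq_trans (subset_leq_card (subsetIl _ _)) Xk.
  + by move=> u w hu hw; apply: Xs; apply: (subsetP sub1).
  + move=> K /compsP[u0 u0T ->].
    have := XK _ (comp_in m (subsetP sub1 _ u0T)).
    apply: hered; first exact: comp_mono.
      by apply/set0Pn; exists u0; apply: comp_self.
    exact: comp_connected.
case=> X' [XS Xk Xs XK].
have X'S := subsetP XS.
have cC w : w \in C -> w \in x |: C by move=> h; rewrite in_setU1 h orbT.
case: (boolP ((x \in X') || (X' :&: C != set0))) => hA.
  exists (x |: (X' :\: C)).
  have inX w : (w \in [set: V] :\: (x |: (X' :\: C))) = (w != x) && ((w \in C) || (w \notin X')).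
    by rewrite !inE; case: (w == x); case: (w \in C); case: (w \in X').
  split.
  + exact: subsetT.
  + case/orP: hA => [xX | ne].
      apply: leq_trans _ Xk; apply: subset_leq_card; apply/subsetP => w.
      by rewrite !inE; case/orP => [/eqP -> //|/andP[_ ->]].
    rewrite cardsU1; have h2 := cardsID C X'; have h1 : 0 < #|X' :&: C| by rewrite card_gt0.
    apply: leq_trans _ Xk; rewrite -h2; apply: leq_add => //.
    by case: (x \notin _).
  + move=> u w; rewrite !inX => /andP[ux uXC] /andP[wx wXC].
    case uC: (u \in C); case wC: (w \in C).
    * by case: hCt => _ sC _ _; apply: sC.
    * by rewrite (zero u w uC (negbT wC) wx).
    * by rewrite msym (zero w u wC (negbT uC) ux).
    * apply: Xs.
        by rewrite in_setD (nCS u (negbT uC)) andbT; move: uXC; rewrite uC.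
      by rewrite in_setD (nCS w (negbT wC)) andbT; move: wXC; rewrite wC.
  + move=> K /compsP[u0 u0T ->].
    set K0 := comp m _ u0.
    have xK : x \notin K0.
      by apply/negP => /(subsetP (comp_subset _ _ _)); rewrite inX eqxx.
    have cK : connected_on m K0 := @comp_connected _ _ msym _ u0.
    have u0K : u0 \in K0 := comp_self m u0T.
    have ne : K0 != set0 by apply/set0Pn; exists u0.
    case u0C: (u0 \in C).
      apply: (hered (K := C) _ ne cK); last by right.
      by apply/subsetP => w wK; rewrite (sub_side _ _ _ xK cK u0K wK).
    have u0S : u0 \in S' :\: X'.
      move: u0T; rewrite inX u0C /= => /andP[_ h]; by rewrite in_setD h nCS ?u0C.
    apply: (hered (K := comp m (S' :\: X') u0) _ ne cK (XK _ (comp_in m u0S))).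
    apply: (conn_sub_comp cK _ u0K); apply/subsetP => w wK.
    have wC : w \notin C by rewrite (sub_side _ _ _ xK cK u0K wK) u0C.
    have := subsetP (comp_subset _ _ _) _ wK; rewrite inX => /andP[_].
    by rewrite (negbTE wC) /= => wX; rewrite in_setD wX nCS.
have xX : x \notin X' by move: hA; rewrite negb_or => /andP[].
have CX w : w \in C -> w \notin X'.
  move: hA; rewrite negb_or negbK => /andP[_ /eqP e] wC; apply/negP => wX.
  have : w \in X' :&: C by rewrite inE wX wC.
  by rewrite e inE.
have inT w : (w \in [set: V] :\: X') = (w \notin X') by rewrite !inE andbT.
have [_ sxC _ axC] := hxCt.
have tri u w z : u \in x |: C -> w \in x |: C -> z \in x |: C -> u != w -> u != z -> w != z ->
    0 < m u w -> 0 < m w z -> 0 < m z u -> False.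
  move=> uC wC zC uw uz wz muw mwz mzu.
  have U : uniq [:: u; w; z] by rewrite /= !inE !negb_or uw uz wz.
  have := axC [:: u; w; z] isT U; move/negP; apply.
  by rewrite /= /madj uC wC zC muw mwz mzu.
have simT : simple_on m ([set: V] :\: X').
  move=> u w; rewrite !inT => uX wX.
  case uC: (u \in C).
    case wxC: (w \in x |: C); first by apply: sxC => //; rewrite cC.
    move/negbT: wxC; rewrite in_setU1 negb_or => /andP[wx wC].
    by rewrite (zero u w uC wC wx).
  case wC: (w \in C).
    case: (eqVneq u x) => [->|ux]; first by apply: sxC; rewrite ?setU11 ?cC.
    by rewrite msym (zero w u wC (negbT uC) ux).
  by apply: Xs; rewrite in_setD nCS ?uC ?wC ?uX ?wX.
exists X'; split; [exact: subsetT | exact: Xk | exact: simT |].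
move=> K /compsP[u0 u0T ->].
set T := [set: V] :\: X'.
set K0 := comp m T u0.
have cK : connected_on m K0 := @comp_connected _ _ msym _ u0.
have u0K : u0 \in K0 := comp_self m u0T.
have ne : K0 != set0 by apply/set0Pn; exists u0.
have XSS w : w \in T -> w \notin C -> w \in S' :\: X'.
  by move=> wT wC; rewrite in_setD nCS // andbT -inT.
case xK: (x \in K0); last first.
  move/negbT: xK => xK.
  case u0C: (u0 \in C).
    apply: (hered (K := C) _ ne cK); last by right.
    by apply/subsetP => w wK; rewrite (sub_side _ _ _ xK cK u0K wK).
  have u0S : u0 \in S' :\: X' by apply: XSS; rewrite ?u0C.
  apply: (hered (K := comp m (S' :\: X') u0) _ ne cK (XK _ (comp_in m u0S))).
  apply: (conn_sub_comp cK _ u0K); apply/subsetP => w wK.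
  have wC : w \notin C by rewrite (sub_side _ _ _ xK cK u0K wK) u0C.
  by apply: (XSS _ _ wC); exact: (subsetP (comp_subset m T u0) _ wK).
have xT : x \in T by rewrite inT.
have csym (U : {set V}) := sym_connect_sym (madj_sym msym U).
set K' := comp m (S' :\: X') v.
have inS w : w \in x :: p -> w \in S' :\: X'.
  move=> wp; rewrite in_setD SpE inD wp !orbT /= andbT.
  move: (xpC w wp); rewrite in_setU1 => /predU1P[->//|wC]; exact: CX.
have vS : v \in S' :\: X' by apply: inS.
have vK' : v \in K' := comp_self m vS.
have xv : connect (madj m (S' :\: X')) v x.
  rewrite csym; apply/connectP; exists p; last by rewrite hpl.
  apply: (sub_in_path (P := fun w => w \in S' :\: X')) hp.
    by move=> y z yS zS; apply: madj_in.
  by apply/allP => w /inS.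
have K'tree : is_tree m K'.
  case: (XK _ (comp_in m vS)) => // hPIG; exfalso.
  have inK' w : w \in C -> w \in D -> 0 < m v w -> w \in K'.
    move=> wC wD mvw; rewrite /K' /comp inE in_setD SpE wD CX //=.
    by apply: connect1; rewrite /madj vS in_setD SpE wD CX //= mvw.
  have aK' : a \in K' by apply: inK' => //; rewrite inD eqxx.
  have bK' : b \in K' by apply: inK' => //; rewrite inD eqxx orbT.
  have prK' : pr \in K'.
    rewrite /K' /comp inE (inS _ prp) /=; apply: connect1.
    by rewrite /madj vS (inS _ prp) msym mprv.
  have ne_p w : w \notin x :: p -> w != pr /\ w != v.
    by move=> h; split; apply/eqP => e; move: h; rewrite e ?prp ?vp.
  have [apr av] := ne_p a haP.
  have [bpr bv] := ne_p b hbP.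
  have nadj u w : u \in C -> w \in x |: C -> u != w -> u != v -> w != v ->
      0 < m v u -> 0 < m w v -> ~~ madj m K' u w.
    move=> uC wC uw uv wv mvu mwv; apply/negP => /and3P[_ _ muw].
    apply: (tri v u w) => //; rewrite ?cC //; by rewrite eq_sym.
  apply: (claw_not_pig vK' aK' bK' prK' hab apr bpr _ _ _ _ _ _ _ _ _ hPIG).
  - by rewrite eq_sym.
  - by rewrite eq_sym.
  - by rewrite eq_sym.
  - by rewrite /madj vK' aK' hva.
  - by rewrite /madj vK' bK' hvb.
  - by rewrite /madj vK' prK' msym mprv.
  - by apply: (nadj a b haC (cC b hbC) hab av bv hva); rewrite msym.
  - exact: (nadj a pr haC (xpC _ prp) apr av prv hva mprv).
  - exact: (nadj b pr hbC (xpC _ prp) bpr bv prv hvb mprv).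
have outC w : connect (madj m T) x w -> w \notin C -> connect (madj m (T :\: C)) x w.
  move=> /connectP[q' pq' ->].
  apply: (@path_inv _ (madj m T) (fun y => y \notin C -> connect (madj m (T :\: C)) x y) _ q' x pq').
    move=> y z /and3P[yT zT myz] Iy zC.
    case yC: (y \in C).
      case: (eqVneq z x) => [->|zx]; first exact: connect0.
      by rewrite (cross y z yC zx myz) in zC.
    apply: (connect_trans (Iy (negbT yC))); apply: connect1.
    by apply/and3P; split => //; apply/setDP; split => //; rewrite yC.
  by move=> _; exact: connect0.
have KK' w : w \in K0 -> w \notin C -> w \in K'.
  move=> wK wC.
  have cxw : connect (madj m T) x w.
    move: xK wK; rewrite /K0 /comp !inE => /andP[_ c1] /andP[_ c2].
    by rewrite csym in c1; apply: connect_trans c1 c2.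
  have := outC w cxw wC => c3.
  have c4 : connect (madj m (S' :\: X')) x w.
    apply: (connect_sub _ c3) => y z e; apply: connect1; apply: (madj_sub _ e).
    apply/subsetP => t /setDP[tT tC]; exact: XSS.
  rewrite /K' /comp inE (connect_trans xv c4) andbT.
  apply: (XSS _ _ wC); move: wK; rewrite /K0 /comp inE; by case/andP.
right; split; first by apply/set0Pn; exists x; rewrite xK.
- move=> u w uK wK; apply: simT; exact: (subsetP (comp_subset m T u0)).
- exact: cK.
move=> c c3 cu; apply/negP => cc.
have cK0 := cycle_all cc.
have Hs u w : u != x -> w != x -> madj m K0 u w -> (u \in C) = (w \in C).
  move=> ux wx /and3P[_ _ muw].
  case uC: (u \in C); first by rewrite (cross u w uC wx muw).
  case wC: (w \in C) => //; by rewrite (cross w u wC ux ltac:(by rewrite msym)) in uC.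
have split_c : all (fun w => w \in x |: C) c \/ all (fun w => w \notin C) c.
  case xc: (x \in c).
    case/rot_to: xc => i s' hrot.
    have cc' : cycle (madj m K0) (x :: s') by rewrite -hrot rot_cycle.
    have cu' : uniq (x :: s') by rewrite -hrot rot_uniq.
    have memr w : (w \in c) = (w \in x :: s') by rewrite -hrot mem_rot.
    case: s' hrot cc' cu' memr => [|y s''] hrot cc' cu' memr.
      by have := congr1 size hrot; rewrite size_rot /= => h; rewrite h in c3.
    move: cc' => /= /andP[_]; rewrite rcons_path => /andP[ps _].
    have Q : all (fun w => w != x) (y :: s'').
      apply/allP => w wIn; apply/eqP => ew; move: cu'; rewrite -ew => /andP[h _].
      by rewrite wIn in h.
    have := path_side (P := fun w => w \in C) Hs Q ps.
    move=> /allP hs.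
    case yC: (y \in C); [left|right]; apply/allP => w; rewrite memr !inE => /or3P[/eqP->|/eqP->|ws];
      (first [by rewrite ?eqxx ?yC ?xC ?orbT | by have := hs w ws; rewrite yC => /eqP ->; rewrite ?orbT]).
  have [y [s hcs]] : exists y s, c = y :: s by case: (c) c3 => [//|y s] _; exists y, s.
  have ps : path (madj m K0) y (rcons s y) by move: cc; rewrite hcs.
  have Q : all (fun w => w != x) (y :: rcons s y).
    apply/allP => w wIn; apply/eqP => ew; move: xc; rewrite -ew hcs.
    by move: wIn; rewrite inE mem_rcons inE orbA orbb => ->.
  have := path_side (P := fun w => w \in C) Hs Q ps.
  move=> /allP hs.
  have hs' w : w \in c -> (w \in C) = (y \in C).
    by move=> wc; apply/eqP; apply: hs; rewrite mem_rcons -hcs.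
  case yC: (y \in C); [left|right]; apply/allP => w wIn; rewrite ?in_setU1 (hs' w wIn) yC ?orbT //.
case: split_c => hc.
  move: (axC c c3 cu); rewrite (sub_in_cycle (P := fun w => w \in x |: C) _ hc cc) //.
  by move=> y z yP zP; apply: madj_in.
have hcK' : all (fun w => w \in K') c.
  apply/allP => w wc; apply: KK'; [exact: (allP cK0)|exact: (allP hc)].
case: K'tree => _ _ _ acK'.
move: (acK' c c3 cu); rewrite (sub_in_cycle (P := fun w => w \in K') _ hcK' cc) //.
by move=> y z yP zP; apply: madj_in.
Qed.
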